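(* If $G$ is a graph of order $n\ge 7$ having at least one vertex $u$ with $3\le\deg(u)\le n-4$, then $\beta_p(G)\le n-3$.
   Context: All graphs are finite, simple, undirected and connected. For a partition $\Pi=\{S_1,\dots,S_m\}$ of $V(G)$, $r(u|\Pi)=(d(u,S_1),\dots,d(u,S_m))$ with $d(u,S)=\min_{w\in S}d(u,w)$; $\Pi$ is locating if $r(u|\Pi)\ne r(v|\Pi)$ for all distinct $u,v$; $\beta_p(G)$ is the minimum size of a locating partition. *)

(* Defs.v *)
From mathcomp Require Import all_boot.
Set Implicit Arguments. Unset Strict Implicit. Unset Printing Implicit Defensive.

Section Graphs.
Variables (T : finType) (e : rel T).

Definition simple_graph := symmetric e /\ irreflexive e.
Definition connected_graph := forall u v : T, connect e u v.

Definition nbhd (u : T) : {set T} := [set w | e u w].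
Definition deg (u : T) : nat := #|nbhd u|.

Fixpoint ball (k : nat) (u : T) : {set T} :=
  match k with
  | 0 => [set u]
  | k'.+1 => ball k' u :|: \bigcup_(w in ball k' u) nbhd w
  end.

(* graph distance d(u,v): least k with v in ball k u
   (in a connected graph this is < #|T|) *)
Definition dist (u v : T) : nat := find (fun k => v \in ball k u) (iota 0 #|T|).

Definition dist_set (u : T) (S : {set T}) : nat :=
  \big[minn/#|T|]_(w in S) dist u w.

Definition locatingb (P : {set {set T}}) : bool :=
  partition P [set: T] &&
  [forall u, forall v, (u != v) ==> [exists S in P, dist_set u S != dist_set v S]].

(* partition dimension: minimum size of a locating partition
   (the singleton partition is locating and has size #|T|, so the default
   #|T| does not affect the minimum) *)
Definition beta_p : nat :=
  \big[minn/#|T|]_(P : {set {set T}} | locatingb P) #|P|.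

End Graphs.

(* Main.v *)
Require Import Defs.
From mathcomp Require Import all_boot.
From mathcomp Require Import zify.
Set Implicit Arguments. Unset Strict Implicit. Unset Printing Implicit Defensive.

Section Aux.
Variables (T : finType) (e : rel T).

Lemma iota_split n : 2 <= n -> iota 0 n = 0 :: 1 :: iota 2 (n - 2).
Proof. by case: n => [|[|n]] //= _; rewrite subn2. Qed.

Lemma ball1 x : ball e 1 x = x |: nbhd e x.
Proof. by rewrite /= big_set1. Qed.

Lemma dist0 x y : 2 <= #|T| -> (dist e x y == 0) = (x == y).
Proof.
move=> H; rewrite /dist iota_split //= inE.
by have [_|_] := eqVneq y x.
Qed.

Lemma dist1 x y : 2 <= #|T| -> (dist e x y == 1) = (x != y) && e x y.
Proof.
move=> H; rewrite /dist iota_split //= big_set1 !inE.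
by have [_|_] := eqVneq y x; case: (e x y).
Qed.

Lemma dist_le x y : dist e x y <= #|T|.
Proof. by rewrite /dist; apply: leq_trans (find_size _ _) _; rewrite size_iota. Qed.

Lemma bigmin_le (I : finType) (P : pred I) (F : I -> nat) (x : nat) j :
  P j -> \big[minn/x]_(i | P i) F i <= F j.
Proof.
move=> Pj; rewrite -big_filter.
have : j \in [seq i <- index_enum I | P i] by rewrite mem_filter Pj mem_index_enum.
elim: [seq i <- index_enum I | P i] => //= a s IH.
rewrite inE big_cons => /orP [/eqP <-|/IH H]; first exact: geq_minl.
by rewrite geq_min H orbT.
Qed.

Lemma dist_set_mem x (S : {set T}) : 2 <= #|T| -> x \in S -> dist_set e x S = 0.
Proof.
move=> H xS; apply/eqP; rewrite -leqn0.
by apply: leq_trans (bigmin_le _ _ xS) _; rewrite leqn0 dist0 ?eqxx.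
Qed.

Lemma dist_set_nmem y (S : {set T}) : 2 <= #|T| -> y \notin S -> 0 < dist_set e y S.
Proof.
move=> H yS; apply: (big_ind (fun k => 0 < k)).
- exact: leq_trans H.
- by move=> a b; rewrite leq_min => -> ->.
- move=> w wS; rewrite lt0n dist0 //; apply: contraNneq yS => ->; done.
Qed.

Lemma dist_set1 y u : dist_set e y [set u] = dist e y u.
Proof.
apply/eqP; rewrite eqn_leq (bigmin_le _ _ (set11 u)) /=.
apply: (big_ind (fun k => dist e y u <= k)).
- exact: dist_le.
- by move=> a b; rewrite leq_min => -> ->.
- by move=> w; rewrite inE => /eqP ->.
Qed.

Lemma three (S : {set T}) : 2 < #|S| ->
  exists a b c, [/\ a \in S, b \in S & c \in S] /\ [/\ a != b, a != c & b != c].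
Proof.
move=> H.
have /card_gt0P [a aS] : 0 < #|S| by apply: leq_trans H.
have H1 : 1 < #|S :\ a| by move: H; rewrite (cardsD1 a S) aS.
have /card_gt0P [b bS] : 0 < #|S :\ a| by apply: leq_trans H1.
have H2 : 0 < #|S :\ a :\ b| by move: H1; rewrite (cardsD1 b (S :\ a)) bS.
have /card_gt0P [c cS] := H2.
move: bS cS; rewrite !inE => /andP [ba bS] /andP [cb /andP [ca cS]].
by exists a, b, c; split; split; rewrite // eq_sym.
Qed.

End Aux.
Theorem corollary11 (T : finType) (e : rel T) :
  simple_graph e -> connected_graph e ->
  7 <= #|T| ->
  (exists u : T, 3 <= deg e u <= #|T| - 4) ->
  beta_p e <= #|T| - 3.
Proof.
move=> [esym eirr] _ n7 [u /andP [d3 d4]].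
have n2 : 2 <= #|T| by apply: leq_trans n7.
set A := nbhd e u.
have uA : u \notin A by rewrite inE eirr.
set B := ~: (u |: A).
have cB : 2 < #|B|.
  have h1 := cardsC (u |: A).
  have h2 := cardsU1 u A.
  rewrite uA /= in h2.
  rewrite /deg -/A in d4.
  rewrite /B; lia.
have [a1 [a2 [a3 [[A1 A2 A3] [a12 a13 a23]]]]] := three (d3 : 2 < #|A|).
have [b1 [b2 [b3 [[B1 B2 B3] [b12 b13 b23]]]]] := three cB.
have bnA : forall b, b \in B -> (b \notin A) && (b != u).
  by move=> b; rewrite !inE negb_or andbC.
have /andP [nA1 nu1] := bnA _ B1.
have /andP [nA2 nu2] := bnA _ B2.
have /andP [nA3 nu3] := bnA _ B3.
have ne : forall a b, a \in A -> b \notin A -> a != b.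
  by move=> a b Ha; apply: contraNneq => <-.
have key : forall z, (dist e z u == 1) = (z \in A).
  move=> z; rewrite dist1 // inE esym.
  case: (eqVneq z u) => [->|] //=; by rewrite eirr.
pose f z := if z == b1 then a1 else if z == b2 then a2 else if z == b3 then a3 else z.
have fu : f u = u by rewrite /f eq_sym (negbTE nu1) eq_sym (negbTE nu2) eq_sym (negbTE nu3).
have fS : forall z, (f z == u) = (z == u).
  move=> z; rewrite /f.
  case: ifP => [/eqP ->|_]; first by rewrite (negbTE nu1) (negbTE (ne _ _ A1 uA)).
  case: ifP => [/eqP ->|_]; first by rewrite (negbTE nu2) (negbTE (ne _ _ A2 uA)).
  case: ifP => [/eqP ->|_]; first by rewrite (negbTE nu3) (negbTE (ne _ _ A3 uA)).
  done.
set P := preim_partition f [set: T].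
have PL : locatingb e P.
  rewrite /locatingb preim_partitionP /=.
  apply/forallP => x; apply/forallP => y; apply/implyP => nxy.
  apply/existsP.
  case: (eqVneq (f x) (f y)) => fxy.
  - exists [set z in [set: T] | f u == f z].
    apply/andP; split; first by apply/imsetP; exists u.
    have -> : [set z in [set: T] | f u == f z] = [set u].
      by apply/setP => z; rewrite !inE fu eq_sym fS.
    rewrite !dist_set1.
    have Hxy : (x \in A) != (y \in A).
      move: fxy nxy; rewrite /f.
      case: (x == b1) / eqP => [->|_]; [|case: (x == b2) / eqP => [->|_]; [|case: (x == b3) / eqP => [->|_]]];
      (case: (y == b1) / eqP => [->|_]; [|case: (y == b2) / eqP => [->|_]; [|case: (y == b3) / eqP => [->|_]]]);
      move=> E N; subst;
      by rewrite ?eqxx ?A1 ?A2 ?A3 ?(negbTE nA1) ?(negbTE nA2) ?(negbTE nA3) in N a12 a13 a23 *.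
    apply/eqP => E; move: Hxy; by rewrite -(key x) -(key y) E eqxx.
  - exists [set z in [set: T] | f x == f z].
    apply/andP; split; first by apply/imsetP; exists x.
    rewrite dist_set_mem ?inE ?eqxx // eq_sym -lt0n dist_set_nmem // inE /=.
    by rewrite in_setT.
apply: (@leq_trans #|P|); first exact: bigmin_le.
have -> : P = (fun v => [set z in [set: T] | v == f z]) @: (f @: [set: T]).
  by rewrite -imset_comp; apply: eq_imset.
apply: leq_trans (leq_imset_card _ _) _.
apply: (@leq_trans #|[set: T] :\ b1 :\ b2 :\ b3|).
  apply: subset_leq_card; apply/subsetP => _ /imsetP [z _ ->]; rewrite !inE andbT.
  rewrite /f.
  case: ifP => Z1; first by rewrite !ne.
  case: ifP => Z2; first by rewrite !ne.
  case: ifP => Z3; first by rewrite !ne.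
  by rewrite Z1 Z2 Z3.
have h1 := cardsD1 b1 [set: T].
have h2 := cardsD1 b2 ([set: T] :\ b1).
have h3 := cardsD1 b3 ([set: T] :\ b1 :\ b2).
rewrite !inE in h1 h2 h3.
rewrite cardsT in h1.
rewrite !andbT ![b2 == _]eq_sym ![b3 == _]eq_sym b12 b13 b23 /= in h2 h3.
rewrite h1 h2 h3 !add1n.
by rewrite !subSS subn0.
Qed.
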